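(* A complex linear map $\Phi: M_n(\mathbb{C}) \to M_r(\mathbb{C})$ preserves range orthogonality, i.e. $\Phi(A)^*\Phi(B) = 0$ whenever $A^*B = 0$, if and only if there exist a nonnegative integer $k$ with $nk \le r$ and matrices $S, T \in M_r(\mathbb{C})$ with $S^*S = I_r$ such that $$\Phi(A) = S\begin{pmatrix} I_k\otimes A & 0\\ 0 & 0_{r-nk}\end{pmatrix}T\quad\text{for all } A\in M_n(\mathbb{C}).$$
   Context: $A^*$ denotes the conjugate transpose; $I_k\otimes A$ denotes $A\oplus\cdots\oplus A$ ($k$ copies). *)

(* Defs.v *)
(* complex numbers modelled by algC (algebraic complex numbers). *)
From HB Require Import structures.
From mathcomp Require Import all_boot all_order all_algebra all_field.
Set Implicit Arguments. Unset Strict Implicit. Unset Printing Implicit Defensive.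
Import GRing.Theory Num.Theory.
Local Open Scope ring_scope.

Definition mxadj (m n : nat) (A : 'M[algC]_(m, n)) : 'M[algC]_(n, m) :=
  (map_mx (@Num.conj algC) A)^T.

(* pad a square m x m matrix B to an r x r matrix [B 0; 0 0_(r-m)]
   (B occupies the top-left corner; entries beyond r are truncated, which
   never happens when m <= r) *)
Definition padmx (r m : nat) (B : 'M[algC]_m) : 'M[algC]_r :=
  \matrix_(i < r, j < r)
    match (insub (val i) : option 'I_m), (insub (val j) : option 'I_m) with
    | Some i', Some j' => B i' j'
    | _, _ => 0
    end.

(* I_k ⊗ A = A ⊕ ... ⊕ A (k copies), of size \sum_(i<k) n = n k *)
Definition kronI (n k : nat) (A : 'M[algC]_n) : 'M[algC]_(\sum_(i < k) n) :=
  \mxdiag_(i < k) A.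

(* Main.v *)
Require Import Defs.
From HB Require Import structures.
From mathcomp Require Import all_boot all_order all_algebra all_field.
Import Order.TTheory GRing.Theory Num.Theory.
Set Implicit Arguments. Unset Strict Implicit. Unset Printing Implicit Defensive.
Local Open Scope ring_scope.

Section Adj.
Implicit Types (m n p : nat).

Lemma hadjE m n (A : 'M[algC]_(m, n)) i j : mxadj A i j = (A j i)^*.
Proof. by rewrite /mxadj !mxE. Qed.

Lemma hadjK m n (A : 'M[algC]_(m, n)) : mxadj (mxadj A) = A.
Proof. by apply/matrixP => i j; rewrite !hadjE conjCK. Qed.

Lemma hadjM m n p (A : 'M[algC]_(m, n)) (B : 'M[algC]_(n, p)) :
  mxadj (A *m B) = mxadj B *m mxadj A.
Proof.
apply/matrixP => i j; rewrite hadjE !mxE rmorph_sum; apply: eq_bigr => k _.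
by rewrite !hadjE rmorphM mulrC.
Qed.

Lemma hadjD m n (A B : 'M[algC]_(m, n)) : mxadj (A + B) = mxadj A + mxadj B.
Proof. by apply/matrixP => i j; rewrite !hadjE !mxE rmorphD. Qed.

Lemma hadjN m n (A : 'M[algC]_(m, n)) : mxadj (- A) = - mxadj A.
Proof. by apply/matrixP => i j; rewrite !hadjE !mxE rmorphN. Qed.

Lemma hadjB m n (A B : 'M[algC]_(m, n)) : mxadj (A - B) = mxadj A - mxadj B.
Proof. by rewrite hadjD hadjN. Qed.

Lemma hadjZ m n (c : algC) (A : 'M[algC]_(m, n)) : mxadj (c *: A) = c^* *: mxadj A.
Proof. by apply/matrixP => i j; rewrite !hadjE !mxE rmorphM. Qed.

Lemma hadj0 m n : mxadj (0 : 'M[algC]_(m, n)) = 0.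
Proof. by apply/matrixP => i j; rewrite !hadjE !mxE rmorph0. Qed.

Lemma hadj1 n : mxadj (1%:M : 'M[algC]_n) = 1%:M.
Proof.
apply/matrixP => i j; rewrite hadjE !mxE eq_sym.
by case: eqP => _; rewrite ?mulr1n ?mulr0n ?rmorph1 ?rmorph0.
Qed.

Lemma hadj_sum m n (I : finType) (F : I -> 'M[algC]_(m, n)) :
  mxadj (\sum_i F i) = \sum_i mxadj (F i).
Proof.
apply/matrixP => a b; rewrite hadjE !summxE rmorph_sum.
by apply: eq_bigr => i _; rewrite hadjE.
Qed.

Lemma hadj_row_mx m n1 n2 (A : 'M[algC]_(m, n1)) (B : 'M[algC]_(m, n2)) :
  mxadj (row_mx A B) = col_mx (mxadj A) (mxadj B).
Proof. by rewrite /mxadj map_row_mx tr_row_mx. Qed.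

Lemma hadj_delta m n (i : 'I_m) (j : 'I_n) :
  mxadj (delta_mx i j : 'M[algC]_(m, n)) = delta_mx j i.
Proof.
apply/matrixP => a b; rewrite hadjE !mxE.
by case: eqP => _; case: eqP => _; rewrite /= ?rmorph1 ?rmorph0.
Qed.

Lemma hadj_mxrow m q (q_ : 'I_q -> nat) (B_ : forall j, 'M[algC]_(m, q_ j)) :
  mxadj (\mxrow_j B_ j) = \mxcol_j mxadj (B_ j).
Proof. by apply/matrixP => i j; rewrite !hadjE !mxE. Qed.

Lemma hadjX0 m n (X : 'M[algC]_(m, n)) : mxadj X *m X = 0 -> X = 0.
Proof.
move=> H; apply/matrixP => i j; rewrite mxE.
have /matrixP/(_ j j) := H; rewrite !mxE.
under eq_bigr do rewrite hadjE; move=> Hs.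
have pos : forall k, predT k -> 0 <= (X k j)^* * X k j.
  by move=> k _; rewrite -normCKC exprn_ge0.
have := @psumr_eq0P _ _ predT (fun k => (X k j)^* * X k j) pos Hs i isT.
by rewrite -normCKC => /eqP; rewrite sqrf_eq0 normr_eq0 => /eqP.
Qed.

Lemma hadjX_pos n (z : 'cV[algC]_n) : z != 0 -> 0 < (mxadj z *m z) 0 0.
Proof.
move=> nz; rewrite lt0r; apply/andP; split.
  apply/eqP => h; move/eqP: nz; apply; apply: hadjX0.
  by apply/matrixP => i j; rewrite !ord1 h mxE.
rewrite mxE sumr_ge0 // => k _; rewrite hadjE -normCKC exprn_ge0 //.
Qed.

End Adj.


Lemma gs_step r p (Q : 'M[algC]_(r, p)) (x : 'cV[algC]_r) :
  mxadj Q *m Q = 1%:M -> x != Q *m (mxadj Q *m x) ->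
  exists c : algC,
    mxadj (row_mx Q (c *: (x - Q *m (mxadj Q *m x))))
      *m row_mx Q (c *: (x - Q *m (mxadj Q *m x))) = 1%:M.
Proof.
move=> QQ nx; set z := x - _.
have Qz : mxadj Q *m z = 0.
  by rewrite /z mulmxBr [mxadj Q *m (Q *m _)]mulmxA QQ mul1mx subrr.
have znz : z != 0 by rewrite /z subr_eq0.
have spos := hadjX_pos znz; set s := (mxadj z *m z) 0 0 in spos.
exists (sqrtC s)^-1.
set c := (sqrtC s)^-1.
have c0 : 0 <= c by rewrite invr_ge0 sqrtC_ge0 ltW.
set y := c *: z.
have h1 : mxadj Q *m y = 0 by rewrite /y -scalemxAr Qz scaler0.
have h2 : mxadj y *m Q = 0.
  by rewrite -[Q in _ *m Q]hadjK -hadjM h1 hadj0.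
have h3 : mxadj y *m y = 1%:M.
  rewrite /y (hadjZ c z) -scalemxAl -scalemxAr scalerA (geC0_conj c0).
  rewrite [mxadj z *m z]mx11_scalar -/s.
  rewrite scale_scalar_mx /c -expr2 exprVn sqrtCK mulVf //.
  by rewrite gt_eqF.
rewrite hadj_row_mx mul_col_row QQ h1 h2 h3.
by rewrite scalar_mx_block.
Qed.

Definition emb (a b : nat) : 'M[algC]_(a, b) :=
  \matrix_(i, j) ((val i == val j)%:R).

Lemma hadj_emb a b : mxadj (emb a b) = (emb b a).
Proof.
apply/matrixP => i j; rewrite hadjE !mxE eq_sym.
by case: eqP => _; rewrite ?rmorph1 ?rmorph0.
Qed.

Lemma emb_mul a b c (Hb : (c <= b)%N) : emb a b *m emb b c = emb a c.
Proof.
apply/matrixP => i j; rewrite !mxE.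
have jb : (val j < b)%N by apply: leq_trans (ltn_ord j) Hb.
rewrite (bigD1 (Ordinal jb)) //= !mxE eqxx mulr1 big1 ?addr0 //.
move=> k /eqP nk; rewrite !mxE.
have -> : (val k == val j) = false.
  by apply/eqP => e; apply: nk; apply: val_inj.
by rewrite mulr0.
Qed.

Lemma emb_id a : emb a a = 1%:M.
Proof. by apply/matrixP => i j; rewrite !mxE. Qed.

Lemma emb_tr_emb r N (H : (N <= r)%N) : emb N r *m emb r N = 1%:M.
Proof. by rewrite emb_mul // emb_id. Qed.

Lemma row_mx_emb r N (W : 'M[algC]_(r, N)) (y : 'cV[algC]_r) :
  row_mx W y *m emb (N + 1) N = W.
Proof.
apply/matrixP => i j; rewrite !mxE.
rewrite (bigD1 (lshift 1 j)) //= !mxE eqxx mulr1 big1 ?addr0.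
  by rewrite (unsplitK (inl _ j : 'I_N + 'I_1)).
move=> k /eqP nk; rewrite [emb _ _ _ _]mxE.
have -> : (val k == val j) = false.
  by apply/eqP => e; apply: nk; apply: val_inj.
by rewrite mulr0.
Qed.

Lemma padmx_emb r N (D : 'M[algC]_N) (H : (N <= r)%N) :
  padmx r D = emb r N *m D *m emb N r.
Proof.
apply/matrixP => i j; rewrite /padmx !mxE.
case: (@insubP _ _ 'I_N (val i)) => [i' _ ei|ni]; case: (@insubP _ _ 'I_N (val j)) => [j' _ ej|nj].
- rewrite (bigD1 j') //= big1 => [|k /eqP nk]; last first.
    rewrite !mxE; have -> : (val k == val j) = false.
      by apply/eqP => e; apply: nk; apply: val_inj; rewrite e ej.
    by rewrite mulr0.
  rewrite addr0 !mxE -ej eqxx mulr1 (bigD1 i') //= big1 => [|k /eqP nk].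
    by rewrite !mxE -ei eqxx mul1r addr0.
  rewrite !mxE; have -> : (val i == val k) = false.
    by apply/eqP => e; apply: nk; apply: val_inj; rewrite -e ei.
  by rewrite mul0r.
- rewrite big1 // => k _; rewrite !mxE.
  have -> : (val k == val j) = false.
    by apply/eqP => e; move: nj; rewrite -e ltn_ord.
  by rewrite mulr0.
- rewrite big1 // => k _; rewrite !mxE big1 ?mul0r // => l _; rewrite !mxE.
  have -> : (val i == val l) = false.
    by apply/eqP => e; move: ni; rewrite e ltn_ord.
  by rewrite mul0r.
- rewrite big1 // => k _; rewrite !mxE.
  have -> : (val k == val j) = false.
    by apply/eqP => e; move: nj; rewrite -e ltn_ord.
  by rewrite mulr0.
Qed.


Lemma col_ext m n (A B : 'M[algC]_(m, n)) :
  (forall j : 'I_n, A *m (delta_mx j 0 : 'cV_n) = B *m (delta_mx j 0 : 'cV_n)) -> A = B.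
Proof.
move=> H; apply/matrixP => i j; have := H j; rewrite -!colE => /matrixP/(_ i 0).
by rewrite !mxE.
Qed.

Lemma exists_col m n (A B : 'M[algC]_(m, n)) : A != B ->
  exists j : 'I_n, A *m (delta_mx j 0 : 'cV_n) != B *m (delta_mx j 0 : 'cV_n).
Proof.
move=> ne; apply/existsP; rewrite -negb_forall; apply/negP => /forallP H.
move/eqP: ne; apply; apply: col_ext => j; exact/eqP/H.
Qed.

Lemma ext_unitary r d : forall N (W : 'M[algC]_(r, N)),
  (N + d)%N = r -> mxadj W *m W = 1%:M ->
  exists S : 'M[algC]_r, mxadj S *m S = 1%:M /\ S *m emb r N = W.
Proof.
elim: d => [|d IH] N W.
  rewrite addn0 => e; subst r => WW; exists W; split => //.
  by rewrite emb_id mulmx1.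
move=> e WW.
have [j Hj] : exists j : 'I_r,
    (delta_mx j 0 : 'cV[algC]_r) != W *m (mxadj W *m delta_mx j 0).
  have ne : (1%:M : 'M[algC]_r) != W *m mxadj W.
    apply/eqP => h.
    have := mxrankM_maxl W (mxadj W); rewrite -h mxrank1 => h2.
    have := leq_trans h2 (rank_leq_col W); rewrite -e.
    by rewrite addnS ltnNge leq_addr.
  have [j Hj] := exists_col ne; exists j; by move: Hj; rewrite mul1mx -mulmxA.
have [c Hc] := gs_step WW Hj.
set W' := row_mx W _ in Hc.
have e' : (N + 1 + d)%N = r by rewrite -addnA add1n.
have [S [SS SW]] := IH _ W' e' Hc.
exists S; split => //.
rewrite -(@emb_mul r (N + 1) N) ?leq_addr // mulmxA SW.
exact: row_mx_emb.
Qed.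

Lemma factor r K (M : 'M[algC]_(r, K)) d : forall p (Q : 'M[algC]_(r, p))
  (X : 'M[algC]_(K, p)),
  (p + d)%N = r -> mxadj Q *m Q = 1%:M -> Q = M *m X ->
  exists m (Q' : 'M[algC]_(r, m)) (X' : 'M[algC]_(K, m)),
    mxadj Q' *m Q' = 1%:M /\ Q' = M *m X' /\ M = Q' *m (mxadj Q' *m M).
Proof.
elim: d => [|d IH] p Q X.
  rewrite addn0 => e; subst r => QQ QM; exists p, Q, X; split => //; split => //.
  by rewrite mulmxA (mulmx1C QQ) mul1mx.
move=> e QQ QM.
case: (boolP (M == Q *m (mxadj Q *m M))) => [/eqP h|ne].
  by exists p, Q, X.
have [j Hj] := exists_col ne.
rewrite !mulmxA -[Q *m _ *m _ *m _]mulmxA -[Q *m _ *m _]mulmxA in Hj.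
have [c Hc] := gs_step QQ Hj.
set x := M *m delta_mx j 0 in Hc.
set X' := row_mx X (c *: (delta_mx j 0 - X *m (mxadj Q *m x))).
have e' : (p + 1 + d)%N = r by rewrite -addnA add1n.
apply: (IH _ _ X' e' Hc).
rewrite /X' mul_mx_row -QM -scalemxAr mulmxBr [M *m (X *m _)]mulmxA -QM.
by rewrite -/x.
Qed.


Lemma sum_const_n n k : (\sum_(i < k) n)%N = (k * n)%N.
Proof. by rewrite sum_nat_const card_ord. Qed.

Lemma hadj_kronI n k (A : 'M[algC]_n) : mxadj (kronI k A) = kronI k (mxadj A).
Proof.
apply/matrixP => a b; rewrite hadjE /kronI /mxdiag !mxE.
rewrite [tagnat.sig1 b == _]eq_sym.
by case: eqP => _; rewrite ?conform_mx_id ?hadjE ?mxE ?rmorph0.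
Qed.

Lemma kronI_mul0 n k (A B : 'M[algC]_n) : A *m B = 0 ->
  kronI k A *m kronI k B = 0.
Proof.
move=> AB; rewrite {1}/kronI /mxdiag mul_mxblock_mxdiag.
rewrite -(@mxblock0 _ _ _ (fun _ : 'I_k => n) (fun _ : 'I_k => n)).
apply: eq_mxblock => i j; case: eqP => _; last by rewrite mul0mx.
by rewrite conform_mx_id.
Qed.

Lemma delta_sandwich n m (A : 'M[algC]_n) (p q : 'I_m) (i j : 'I_n) :
  delta_mx p i *m A *m delta_mx j q = A i j *: delta_mx p q.
Proof.
rewrite {1}(matrix_sum_delta A) mulmx_sumr mulmx_suml.
have E : forall k l : 'I_n, delta_mx p i *m (A k l *: delta_mx k l) *m delta_mx j q
   = if (k == i) && (l == j) then A i j *: delta_mx p q else 0.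
  move=> k l; rewrite -scalemxAr -scalemxAl.
  case: (k =P i) => [->|/eqP ki]; last by rewrite mul_delta_mx_0 1?eq_sym // mul0mx scaler0.
  rewrite mul_delta_mx; case: (l =P j) => [->|/eqP lj]; first by rewrite mul_delta_mx.
  by rewrite mul_delta_mx_0 ?scaler0.
under eq_bigr do rewrite mulmx_sumr mulmx_suml.
under eq_bigr do under eq_bigr do rewrite E.
rewrite (bigD1 i) //= [X in _ + X]big1 ?addr0; last first.
  by move=> k ki; rewrite big1 // => l _; rewrite (negbTE ki).
rewrite (bigD1 j) //= [X in _ + X]big1 ?addr0 ?eqxx //.
by move=> l lj; rewrite (negbTE lj) ?andbF.
Qed.


Definition Fm n r (Phi : {linear 'M[algC]_n -> 'M[algC]_r}) (i j : 'I_n) :=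
  Phi (delta_mx i j).
Definition Gm n r (Phi : {linear 'M[algC]_n -> 'M[algC]_r}) (i : 'I_n)
  : 'M[algC]_(r, \sum_(j < n) r) := \mxrow_(j < n) Fm Phi i j.
Definition Em n r (j : 'I_n) : 'M[algC]_(\sum_(l < n) r, r) :=
  \mxcol_(l < n) (if l == j then 1%:M else 0 : 'M[algC]_r).

Lemma F_orth (n r : nat) (Phi : {linear 'M[algC]_n -> 'M[algC]_r}) (H : forall A B : 'M[algC]_n, mxadj A *m B = 0 -> mxadj (Phi A) *m Phi B = 0) i j k l : i != k -> mxadj (Fm Phi i j) *m Fm Phi k l = 0.
Proof. by move=> ik; apply: H; rewrite hadj_delta mul_delta_mx_0. Qed.

Lemma F_eq (n r : nat) (Phi : {linear 'M[algC]_n -> 'M[algC]_r}) (H : forall A B : 'M[algC]_n, mxadj A *m B = 0 -> mxadj (Phi A) *m Phi B = 0) i j k l : mxadj (Fm Phi i j) *m Fm Phi i l = mxadj (Fm Phi k j) *m Fm Phi k l.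
Proof.
case: (i =P k) => [->//|/eqP ik].
have ki : k != i by rewrite eq_sym.
have := H (delta_mx i j + delta_mx k j) (delta_mx i l - delta_mx k l).
rewrite hadjD !hadj_delta mulmxDl !mulmxBr !mul_delta_mx.
rewrite (mul_delta_mx_0 _ _ _ ik) (mul_delta_mx_0 _ _ _ ki) subr0 sub0r addrN.
move/(_ erefl); rewrite linearD linearB /= hadjD mulmxDl !mulmxBr.
rewrite -/(Fm Phi i j) -/(Fm Phi k j) -/(Fm Phi i l) -/(Fm Phi k l).
rewrite (F_orth H _ _ ik) (F_orth H _ _ ki) subr0 sub0r.
by move/eqP; rewrite subr_eq0 => /eqP.
Qed.

Lemma GG (n r : nat) (Phi : {linear 'M[algC]_n -> 'M[algC]_r}) (H : forall A B : 'M[algC]_n, mxadj A *m B = 0 -> mxadj (Phi A) *m Phi B = 0) (i0 : 'I_n) i k : mxadj (Gm Phi i) *m Gm Phi k = if i == k then mxadj (Gm Phi i0) *m Gm Phi i0 else 0.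
Proof.
rewrite /Gm !hadj_mxrow !mul_mxcol_mxrow.
case: (i =P k) => [<-|/eqP ik].
  by apply: eq_mxblock => j l; apply: (F_eq H).
rewrite -(@mxblock0 _ _ _ (fun _ : 'I_n => r) (fun _ : 'I_n => r)).
by apply: eq_mxblock => j l; apply: (F_orth H).
Qed.


Lemma GE (n r : nat) (Phi : {linear 'M[algC]_n -> 'M[algC]_r}) i j : Gm Phi i *m Em r j = Fm Phi i j.
Proof.
rewrite /Gm /Em mul_mxrow_mxcol (bigD1 j) //= eqxx mulmx1 big1 ?addr0 //.
by move=> l /negbTE ->; rewrite mulmx0.
Qed.

Lemma fwd_main (n r : nat) (Phi : {linear 'M[algC]_n -> 'M[algC]_r}) (H : forall A B : 'M[algC]_n, mxadj A *m B = 0 -> mxadj (Phi A) *m Phi B = 0) (i0 : 'I_n) : exists k (S T : 'M[algC]_r),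
      (n * k <= r)%N /\ mxadj S *m S = 1%:M /\
      forall A : 'M[algC]_n, Phi A = S *m padmx r (kronI k A) *m T.
Proof.
have h1 : mxadj (0 : 'M[algC]_(r, 0)) *m 0 = 1%:M by apply/matrixP => -[].
have h2 : (0 : 'M[algC]_(r, 0)) = Gm Phi i0 *m (0 : 'M_(\sum_(j < n) r, 0)) by rewrite mulmx0.
have [m [Q0 [X [QQ0 [QG XQ]]]]] := factor (add0n r) h1 h2.
pose R := mxadj Q0 *m Gm Phi i0.
pose Qi i := Gm Phi i *m X.
have QQ i k : mxadj (Qi i) *m Qi k = if i == k then 1%:M else 0.
  rewrite /Qi hadjM -mulmxA [mxadj (Gm Phi i) *m _]mulmxA (GG H i0).
  case: eqP => _; last by rewrite mul0mx mulmx0.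
  by rewrite -mulmxA mulmxA -hadjM -QG.
have GQR i : Gm Phi i = Qi i *m R.
  pose D := 1%:M - X *m R.
  have G0D : Gm Phi i0 *m D = 0.
    by rewrite /D mulmxBr mulmx1 mulmxA -QG /R -XQ subrr.
  have : mxadj (Gm Phi i *m D) *m (Gm Phi i *m D) = 0.
    rewrite hadjM -mulmxA [mxadj (Gm Phi i) *m _]mulmxA (GG H i0) eqxx.
    by rewrite -mulmxA mulmxA -hadjM G0D mulmx0.
  move/hadjX0; rewrite /D mulmxBr mulmx1 => /eqP; rewrite subr_eq0 => /eqP.
  by rewrite /Qi mulmxA.
pose Rj j := R *m Em r j.
have FQR i j : Fm Phi i j = Qi i *m Rj j by rewrite -GE GQR /Rj mulmxA.
have PhiA A : Phi A = \sum_i \sum_j A i j *: (Qi i *m Rj j).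
  rewrite {1}(matrix_sum_delta A) linear_sum; apply: eq_bigr => i _.
  rewrite linear_sum; apply: eq_bigr => j _.
  by rewrite linearZ /= -FQR.
have sumdelta : forall a, \sum_(p < a) (delta_mx p p : 'M[algC]_a) = 1%:M.
  by move=> a; rewrite (scalar_mx_sum_delta a 1); under [RHS]eq_bigr do rewrite scale1r.
pose W (p : 'I_m) : 'M[algC]_(r, n) := \sum_i Qi i *m delta_mx p i.
pose V (p : 'I_m) : 'M[algC]_(n, r) := \sum_j delta_mx j p *m Rj j.
pose Wb := \mxrow_(p < m) W p.
pose Vb := \mxcol_(p < m) V p.
have WW : mxadj Wb *m Wb = 1%:M.
  rewrite /Wb hadj_mxrow mul_mxcol_mxrow.
  rewrite -(mxdiagZ (p_ := fun _ : 'I_m => n) 1) /mxdiag.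
  apply: eq_mxblock => p q.
  have T i k : mxadj (Qi i *m delta_mx p i) *m (Qi k *m delta_mx q k)
      = if i == k then delta_mx i p *m delta_mx q i else 0.
    rewrite hadjM hadj_delta -mulmxA [mxadj (Qi i) *m _]mulmxA QQ.
    case: (i =P k) => [->|_]; first by rewrite mul1mx.
    by rewrite mul0mx mulmx0.
  rewrite /W hadj_sum mulmx_suml.
  under eq_bigr do rewrite mulmx_sumr.
  under eq_bigr do under eq_bigr do rewrite T.
  rewrite (eq_bigr (fun i => delta_mx i p *m delta_mx q i)); last first.
    move=> i _; rewrite (bigD1 i) //= eqxx big1 ?addr0 // => k.
    by rewrite eq_sym => /negbTE ->.
  under eq_bigr do rewrite mul_delta_mx_cond.
  case: (p == q).
    by rewrite conform_mx_id; under eq_bigr do rewrite mulr1n; apply: sumdelta.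
  by rewrite big1 // => i _; rewrite mulr0n.
have Nle : (\sum_(p < m) n <= r)%N.
  have := mxrankM_maxl (mxadj Wb) Wb; rewrite WW mxrank1 => h.
  exact: leq_trans h (rank_leq_col _).
have [S [SS SW]] := ext_unitary (subnKC Nle) WW.
exists m, S, (emb r _ *m Vb); split; first by rewrite mulnC -sum_const_n.
split => // A.
rewrite padmx_emb // !mulmxA SW -[Wb *m _ *m _ *m _]mulmxA emb_tr_emb // mulmx1.
rewrite /kronI mul_mxrow_mxdiag mul_mxrow_mxcol PhiA.
have WAV p : W p *m A *m V p
    = \sum_i \sum_j A i j *: (Qi i *m delta_mx p p *m Rj j).
  rewrite /W /V mulmx_suml mulmx_suml; apply: eq_bigr => i _.
  rewrite mulmx_sumr; apply: eq_bigr => j _.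
  have -> : Qi i *m delta_mx p i *m A *m (delta_mx j p *m Rj j)
     = Qi i *m (delta_mx p i *m A *m delta_mx j p) *m Rj j by rewrite !mulmxA.
  rewrite delta_sandwich.
  have -> : Qi i *m (A i j *: delta_mx p p) = A i j *: (Qi i *m delta_mx p p).
    by rewrite scalemxAr.
  by rewrite !scalemxAl.
under [RHS]eq_bigr do rewrite WAV.
rewrite [RHS]exchange_big; apply: eq_bigr => i _.
rewrite [RHS]exchange_big; apply: eq_bigr => j _.
rewrite -scaler_sumr -mulmx_suml -mulmx_sumr sumdelta mulmx1.
by [].
Qed.


Theorem theorem4p7 (n r : nat) (Phi : {linear 'M[algC]_n -> 'M[algC]_r}) :
  (forall A B : 'M[algC]_n, mxadj A *m B = 0 -> mxadj (Phi A) *m Phi B = 0)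
  <->
  (exists (k : nat) (S T : 'M[algC]_r),
      (n * k <= r)%N /\ mxadj S *m S = 1%:M /\
      forall A : 'M[algC]_n, Phi A = S *m padmx r (kronI k A) *m T).
Proof.
split.
  case: n Phi => [|n'] Phi H.
    exists 0%N, 1%:M, 0; split => //; split; first by rewrite hadj1 mul1mx.
    by move=> A; rewrite mulmx0 (flatmx0 A) linear0.
  exact: (fwd_main H ord0).
case=> k [S [T [nk [SS PhiE]]]] A B AB.
have Nle : (\sum_(i < k) n <= r)%N by rewrite sum_const_n mulnC.
pose N := (\sum_(i < k) n)%N.
have E X : Phi X = (S *m emb r N) *m kronI k X *m (emb N r *m T).
  by rewrite PhiE padmx_emb // !mulmxA.
have SE : mxadj (S *m emb r N) *m (S *m emb r N) = 1%:M.
  rewrite hadjM hadj_emb -mulmxA [mxadj S *m _]mulmxA SS mul1mx.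
  exact: emb_tr_emb.
rewrite !E.
set P := emb N r *m T; set U := S *m emb r N.
have -> : mxadj (U *m kronI k A *m P) *m (U *m kronI k B *m P)
   = mxadj P *m (mxadj (kronI k A) *m (mxadj U *m U) *m kronI k B) *m P.
  by rewrite !hadjM !mulmxA.
by rewrite SE mulmx1 hadj_kronI kronI_mul0 // mulmx0 mul0mx.
Qed.
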